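(* In the 2SDI setting where Alice measures the qubit observables $A_0=\sigma_x$, $A_1=\sigma_y$ and Bob and Charlie are black boxes, the Svetlichny family $P^V_{SvF}$ demonstrates tripartite steering (i.e. admits no 2SDI fully LHS-LHV model) whenever $V>\frac12$.
   Context: Outcomes and settings: $a,b,c,x,y,z\in\{0,1\}$. For a qubit observable $O$ with eigenvalues $\pm1$, the measurement has projectors $M_0=(\mathbb 1+O)/2$, $M_1=(\mathbb 1-O)/2$; $M^A_{a|x}$ denotes the projectors of $A_x$. Svetlichny family ($0<V\le1$): $P^V_{SvF}(abc|xyz)=\frac{2+(-1)^{a\oplus b\oplus c\oplus xy\oplus yz\oplus xz}\sqrt2\,V}{16}$. 2SDI fully LHS-LHV model: there exist probabilities $q_\lambda$, qubit states $\rho^\lambda_A$ and arbitrary conditional distributions $P_\lambda(b|y)$, $P_\lambda(c|z)$ with $P(abc|xyz)=\sum_\lambda q_\lambda \mathrm{Tr}(M^A_{a|x}\rho^\lambda_A)P_\lambda(b|y)P_\lambda(c|z)$ for all $a,b,c,x,y,z$. A correlation demonstrates tripartite steering in the 2SDI scenario iff it admits no such model. *)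

(* Defs.v *)
From Stdlib Require Import Reals Lra.
Open Scope R_scope.

Record Cx := mkC { re : R ; im : R }.
Definition C0 : Cx := mkC 0 0.
Definition C1 : Cx := mkC 1 0.
Definition Cadd (u v : Cx) : Cx := mkC (re u + re v) (im u + im v).
Definition Cmul (u v : Cx) : Cx :=
  mkC (re u * re v - im u * im v) (re u * im v + im u * re v).
Definition Cconj (u : Cx) : Cx := mkC (re u) (- im u).
Definition Cscale (r : R) (u : Cx) : Cx := mkC (r * re u) (r * im u).

(* qubit operators: 2x2 complex matrices indexed by bool (false = |0>, true = |1>) *)
Definition Mat2 := bool -> bool -> Cx.
Definition Mid : Mat2 := fun i j => if Bool.eqb i j then C1 else C0.
Definition Madd (A B : Mat2) : Mat2 := fun i j => Cadd (A i j) (B i j).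
Definition Mscale (r : R) (A : Mat2) : Mat2 := fun i j => Cscale r (A i j).
Definition Mmul (A B : Mat2) : Mat2 :=
  fun i j => Cadd (Cmul (A i false) (B false j)) (Cmul (A i true) (B true j)).
Definition Mtr (A : Mat2) : Cx := Cadd (A false false) (A true true).

Definition sigma_x : Mat2 := fun i j => if xorb i j then C1 else C0.
Definition sigma_y : Mat2 := fun i j =>
  match i, j with
  | false, true => mkC 0 (-1)
  | true, false => mkC 0 1
  | _, _ => C0
  end.

Definition hermitian (A : Mat2) : Prop := forall i j, A i j = Cconj (A j i).
Definition psd (A : Mat2) : Prop :=
  forall v : bool -> Cx,
    0 <= re (Cadd
          (Cadd (Cmul (Cconj (v false)) (Cmul (A false false) (v false)))
                (Cmul (Cconj (v false)) (Cmul (A false true) (v true))))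
          (Cadd (Cmul (Cconj (v true)) (Cmul (A true false) (v false)))
                (Cmul (Cconj (v true)) (Cmul (A true true) (v true))))).
Definition qubit_state (rho : Mat2) : Prop :=
  hermitian rho /\ psd rho /\ Mtr rho = C1.

Definition sgn (a : bool) : R := if a then -1 else 1.

Definition proj (O : Mat2) (a : bool) : Mat2 :=
  Mscale (1/2) (Madd Mid (Mscale (sgn a) O)).

Definition Alice_obs (x : bool) : Mat2 := if x then sigma_y else sigma_x.
Definition MA (a x : bool) : Mat2 := proj (Alice_obs x) a.

(* Born probability Tr(M rho) (real for Hermitian M, rho) *)
Definition born (M rho : Mat2) : R := re (Mtr (Mmul M rho)).

Definition P_SvF (V : R) (a b c x y z : bool) : R :=
  (2 + sgn (xorb (xorb (xorb a b) c)
                 (xorb (xorb (andb x y) (andb y z)) (andb x z))) * sqrt 2 * V) / 16.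

Fixpoint fsum (n : nat) (f : nat -> R) : R :=
  match n with
  | O => 0
  | S k => fsum k f + f k
  end.

Definition cond_distr (Pr : bool -> bool -> R) : Prop :=
  forall y, (forall b, 0 <= Pr b y) /\ Pr false y + Pr true y = 1.

(* 2SDI fully LHS-LHV model (Alice trusted with measurements MA,
   Bob and Charlie black boxes), with a finite hidden variable lambda < n *)
Definition fully_LHS_LHV_2SDI (P : bool -> bool -> bool -> bool -> bool -> bool -> R)
  : Prop :=
  exists (n : nat) (q : nat -> R) (rhoA : nat -> Mat2)
         (PB PC : nat -> bool -> bool -> R),
    (forall l, (l < n)%nat -> 0 <= q l) /\
    fsum n q = 1 /\
    (forall l, (l < n)%nat -> qubit_state (rhoA l)) /\
    (forall l, (l < n)%nat -> cond_distr (PB l)) /\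
    (forall l, (l < n)%nat -> cond_distr (PC l)) /\
    (forall a b c x y z,
        P a b c x y z =
        fsum n (fun l => q l * born (MA a x) (rhoA l) * PB l b y * PC l c z)).

(* Main.v *)
Require Import Defs.
From Stdlib Require Import Reals Lra Psatz.
Open Scope R_scope.

Definition bsum (f : bool -> R) := f false + f true.
Definition fxyz (x y z : bool) := xorb (xorb (andb x y) (andb y z)) (andb x z).
Definition Sv (P : bool -> bool -> bool -> bool -> bool -> bool -> R) : R :=
  bsum (fun a => bsum (fun b => bsum (fun c => bsum (fun x => bsum (fun y => bsum (fun z =>
    sgn (fxyz x y z) * sgn (xorb (xorb a b) c) * P a b c x y z)))))).

Lemma Sv_SvF V : Sv (P_SvF V) = 4 * sqrt 2 * V.
Proof. unfold Sv, bsum, P_SvF, fxyz; simpl; unfold sgn; field. Qed.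

Lemma Sv_fsum n F : Sv (fun a b c x y z => fsum n (fun l => F l a b c x y z)) =
  fsum n (fun l => Sv (F l)).
Proof.
  induction n as [|n IH]; simpl.
  - unfold Sv, bsum; ring.
  - rewrite <- IH. unfold Sv, bsum; ring.
Qed.

Lemma fsum_le n f g : (forall l, (l < n)%nat -> f l <= g l) -> fsum n f <= fsum n g.
Proof.
  induction n as [|n IH]; simpl; intros H; [lra|].
  assert (fsum n f <= fsum n g) by (apply IH; intros; apply H; lia).
  assert (f n <= g n) by (apply H; lia). lra.
Qed.

Lemma fsum_scal n f c : fsum n (fun l => f l * c) = fsum n f * c.
Proof. induction n; simpl; [ring|rewrite IHn; ring]. Qed.
Lemma state_facts (rho : Mat2) : qubit_state rho ->
  re (rho false false) + re (rho true true) = 1 /\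
  re (rho true false) = re (rho false true) /\
  im (rho true false) = - im (rho false true) /\
  re (rho false true) ^ 2 + im (rho false true) ^ 2 <= 1/4.
Proof.
  intros [H [P T]].
  assert (e1 := f_equal re (H true false)).
  assert (e2 := f_equal im (H true false)).
  assert (e3 := f_equal im (H false false)).
  assert (e4 := f_equal im (H true true)).
  assert (t1 := f_equal re T). assert (t2 := f_equal im T).
  unfold Cconj, Mtr, Cadd, C1 in *; simpl in *.
  assert (q1 := P (fun i => if i then mkC (- re (rho true false)) (- im (rho true false))
                          else mkC (re (rho true true)) 0)).
  assert (q2 := P (fun i => if i then mkC (re (rho false false)) 0
                          else mkC (- re (rho false true)) (- im (rho false true)))).
  unfold Cadd, Cmul, Cconj in q1, q2; simpl in q1, q2.
  destruct (rho false false) as [a ai]; destruct (rho true true) as [d di];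
  destruct (rho false true) as [p pi]; destruct (rho true false) as [r ri]; simpl in *.
  split; [lra|]. split; [lra|]. split; [lra|].
  assert (d = 1 - a) by lra. subst d.
  assert (ai = 0) by lra. assert (di = 0) by lra. subst ai di r ri. ring_simplify in q1. ring_simplify in q2. assert (0 <= (a-1/2)^2) by apply pow2_ge_0. lra.
Qed.
Lemma born0 rho a : qubit_state rho ->
  born (MA a false) rho = 1/2 + sgn a * re (rho false true).
Proof.
  intros Hs; destruct (state_facts rho Hs) as [h1 [h2 [h3 _]]].
  unfold born, MA, Alice_obs, proj, Mtr, Mmul, Mscale, Madd, Mid, sigma_x, Cadd, Cmul, Cscale, C1, C0.
  simpl. destruct a; unfold sgn; lra.
Qed.

Lemma born1 rho a : qubit_state rho ->
  born (MA a true) rho = 1/2 - sgn a * im (rho false true).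
Proof.
  intros Hs; destruct (state_facts rho Hs) as [h1 [h2 [h3 _]]].
  unfold born, MA, Alice_obs, proj, Mtr, Mmul, Mscale, Madd, Mid, sigma_y, Cadd, Cmul, Cscale, C1, C0.
  simpl. destruct a; unfold sgn; lra.
Qed.
Lemma bound h0 h1 b0 b1 c0 c1 : h0^2 + h1^2 <= 1/4 ->
  0 <= b0 <= 1 -> 0 <= b1 <= 1 -> 0 <= c0 <= 1 -> 0 <= c1 <= 1 ->
  let B0 := 2*b0-1 in let B1 := 2*b1-1 in let C0 := 2*c0-1 in let C1 := 2*c1-1 in
  2*((h0+h1)*(B0*C0-B1*C1) + (h0-h1)*(B0*C1+B1*C0)) <= 2 * sqrt 2.
Proof.
  intros Hh Hb0 Hb1 Hc0 Hc1 B0 B1 C0 C1.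
  set (U := B0*C0-B1*C1). set (W := B0*C1+B1*C0).
  assert (HB0 : B0^2 <= 1) by (unfold B0; nra).
  assert (HB1 : B1^2 <= 1) by (unfold B1; nra).
  assert (HC0 : C0^2 <= 1) by (unfold C0; nra).
  assert (HC1 : C1^2 <= 1) by (unfold C1; nra).
  assert (HUW : U^2 + W^2 = (B0^2+B1^2)*(C0^2+C1^2)) by (unfold U, W; ring).
  assert (HUW4 : U^2 + W^2 <= 4).
  { rewrite HUW. assert (0 <= B0^2) by apply pow2_ge_0. assert (0 <= B1^2) by apply pow2_ge_0.
    assert (0 <= C0^2) by apply pow2_ge_0. assert (0 <= C1^2) by apply pow2_ge_0. nra. }
  set (T := (h0+h1)*U + (h0-h1)*W).
  assert (CS : T^2 + (h0*(U-W) - h1*(U+W))^2 = (h0^2+h1^2)*(2*(U^2+W^2))) by (unfold T; ring).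
  assert (T2 : T^2 <= 2).
  { assert (0 <= (h0*(U-W) - h1*(U+W))^2) by apply pow2_ge_0.
    assert (0 <= h0^2) by apply pow2_ge_0. assert (0 <= h1^2) by apply pow2_ge_0. assert (0 <= U^2) by apply pow2_ge_0. assert (0 <= W^2) by apply pow2_ge_0.
    assert ((h0^2+h1^2)*(2*(U^2+W^2)) <= (1/4)*(2*(U^2+W^2))) by (apply Rmult_le_compat_r; lra). lra. }
  assert (s2 : sqrt 2 * sqrt 2 = 2) by (apply sqrt_sqrt; lra).
  assert (s0 : 0 <= sqrt 2) by apply sqrt_pos.
  assert (T <= sqrt 2) by nra.
  lra.
Qed.

Lemma per_lambda ql rho PB PC : qubit_state rho -> cond_distr PB -> cond_distr PC ->
  Sv (fun a b c x y z => ql * born (MA a x) rho * PB b y * PC c z) =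
  ql * (let h0 := re (rho false true) in let h1 := - im (rho false true) in
   let B0 := 2*PB false false-1 in let B1 := 2*PB false true-1 in
   let C0 := 2*PC false false-1 in let C1 := 2*PC false true-1 in
  2*((h0+h1)*(B0*C0-B1*C1) + (h0-h1)*(B0*C1+B1*C0))).
Proof.
  intros Hs HB HC.
  destruct (HB false) as [_ e1]. destruct (HB true) as [_ e2].
  destruct (HC false) as [_ e3]. destruct (HC true) as [_ e4].
  unfold Sv, bsum, fxyz. cbv beta iota delta [xorb andb].
  rewrite !(born0 rho _ Hs), !(born1 rho _ Hs).
  replace (PB true false) with (1 - PB false false) by lra.
  replace (PB true true) with (1 - PB false true) by lra.
  replace (PC true false) with (1 - PC false false) by lra.
  replace (PC true true) with (1 - PC false true) by lra.
  unfold sgn; cbv zeta; ring.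
Qed.

Theorem proposition4 (V : R) (hV0 : 1/2 < V) (hV1 : V <= 1) :
  ~ fully_LHS_LHV_2SDI (P_SvF V).
Proof.
  intros [n [q [rhoA [PB [PC [Hq [Hs [Hr [HB [HC HP]]]]]]]]]].
  assert (E : Sv (P_SvF V) = Sv (fun a b c x y z =>
     fsum n (fun l => q l * born (MA a x) (rhoA l) * PB l b y * PC l c z))).
  { unfold Sv, bsum. rewrite !HP. reflexivity. }
  rewrite Sv_fsum, Sv_SvF in E.
  assert (Le : fsum n (fun l => Sv (fun a b c x y z => q l * born (MA a x) (rhoA l) * PB l b y * PC l c z))
               <= fsum n (fun l => q l * (2 * sqrt 2))).
  { apply fsum_le. intros l Hl. rewrite per_lambda by auto.
    apply Rmult_le_compat_l; [auto|].
    destruct (state_facts _ (Hr l Hl)) as [_ [_ [_ Hk]]].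
    destruct (HB l Hl false) as [b0 _]. destruct (HB l Hl true) as [b1 _].
    destruct (HC l Hl false) as [c0 _]. destruct (HC l Hl true) as [c1 _].
    destruct (HB l Hl false) as [_ f0]. destruct (HB l Hl true) as [_ f1].
    destruct (HC l Hl false) as [_ g0]. destruct (HC l Hl true) as [_ g1].
    pose proof (b0 true). pose proof (b0 false). pose proof (b1 true). pose proof (b1 false).
    pose proof (c0 true). pose proof (c0 false). pose proof (c1 true). pose proof (c1 false).
    apply bound; [|lra|lra|lra|lra].
    replace ((- im (rhoA l false true))^2) with (im (rhoA l false true)^2) by ring. exact Hk. }
  rewrite fsum_scal, Hs in Le.
  assert (0 < sqrt 2) by (apply sqrt_lt_R0; lra).
  rewrite <- E in Le.
  assert (sqrt 2 * (4*V - 2) > 0) by (apply Rmult_lt_0_compat; lra).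
  lra.
Qed.
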